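(* Let $K$ be uniformly distributed on $\{0,1\}^N$, let $\mathcal L$ be a finite set and $\Psi:\{0,1\}^N\to\mathcal L$. For $\lambda\in\mathcal L$ put $S_\lambda := \Psi^{-1}(\lambda)$, let $\mathbb P_\lambda(\cdot) := \mathbb P(\cdot\mid \Psi(K)=\lambda)$ (so $K$ is uniform on $S_\lambda$ under $\mathbb P_\lambda$), and write $\mathbb E_\lambda$ for expectation under $\mathbb P_\lambda$. For $1\le r\le d$ and probes $p_1,\dots,p_r\in\{1,\dots,N\}$ define \[ g_\lambda(p_1,\dots,p_r) := \sum_{x\in\{0,1\}^r}\mathbb P_\lambda\big((K[p_1],\dots,K[p_r]) = x\big)^2. \] Let $P_1,\dots,P_d$ be independent uniform elements of $\{1,\dots,N\}$, independent of $K$. Let $\alpha\ge 0$ with $\alpha+d\le N$. If $\log_2|S_\lambda| \ge N-\alpha$, then \[ \mathbb E_\lambda\big[g_\lambda(P_1,\dots,P_d)\big] \le \Big[h^{-1}\Big(1-\frac{\alpha+d}{N}\Big)\Big]^d. \]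
   Context: $K[i]$ is the $i$-th bit of $K$. $h(p)=p\log_2\frac1p+(1-p)\log_2\frac1{1-p}$ is the binary entropy function on $[0,1]$; $h^{-1}:[0,1]\to[1/2,1]$ is the inverse of the restriction of $h$ to $[1/2,1]$ (a strictly decreasing bijection onto $[0,1]$). *)

(* Defs.v *)
From HB Require Import structures.
From mathcomp Require Import all_boot all_order all_algebra.
From mathcomp Require Import all_classical all_reals all_analysis.
Set Implicit Arguments. Unset Strict Implicit. Unset Printing Implicit Defensive.
Import Order.TTheory GRing.Theory Num.Theory.
Local Open Scope ring_scope.
Local Open Scope classical_set_scope.

Section Defs.
Variable R : realType.

(* base-2 logarithm (ln 0 = 0 in MathComp-Analysis) *)
Definition log2 (x : R) : R := ln x / ln 2.

(* binary entropy h(p) = p log2 (1/p) + (1-p) log2 (1/(1-p));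
   at p = 0 or 1 the corresponding term is 0 since 0^-1 = 0 and ln 0 = 0. *)
Definition binent (p : R) : R := p * log2 p^-1 + (1 - p) * log2 (1 - p)^-1.

(* h^{-1} : inverse of the restriction of h to [1/2, 1]
   (a value p in [1/2,1] with h p = y; unique for y in [0,1]). *)
Definition binent_inv (y : R) : R :=
  xget 1 [set p : R | (2^-1 <= p <= 1) /\ binent p = y].

Variables (N : nat) (L : finType) (Psi : {ffun 'I_N -> bool} -> L) (lam : L).

Definition S_lam : {set {ffun 'I_N -> bool}} := [set k | Psi k == lam].

Definition P_lam (E : pred {ffun 'I_N -> bool}) : R :=
  #|[set k | (Psi k == lam) && E k]|%:R / #|S_lam|%:R.

Definition g_lam (r : nat) (p : 'I_r -> 'I_N) : R :=
  \sum_(x : {ffun 'I_r -> bool})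
     (P_lam (fun k => [forall i : 'I_r, k (p i) == x i])) ^+ 2.

(* E_lambda[g_lambda(P_1,...,P_d)], P_1..P_d iid uniform on {1..N},
   independent of K (g_lambda does not depend on K). *)
Definition Eg_lam (d : nat) : R :=
  (N%:R ^+ d)^-1 * \sum_(p : {ffun 'I_d -> 'I_N}) g_lam p.

End Defs.

(* Main.v *)
Require Import Defs.
From HB Require Import structures.
From mathcomp Require Import all_boot all_order all_algebra.
From mathcomp Require Import all_classical all_reals all_analysis.
From mathcomp Require Import ring lra.
Import Order.TTheory GRing.Theory Num.Theory.
Local Open Scope ring_scope.

Section Ana.
Variable R : realType.

Lemma ln_le_sub1 (x : R) : 0 < x -> ln x <= x - 1.
Proof.
move=> x0; have := expR_ge1Dx (ln x); rewrite lnK ?posrE //; lra.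
Qed.

Lemma conv_exp (r u : R) : 0 <= r <= 1 -> expR (r * u) <= r * expR u + (1 - r).
Proof.
case/andP=> r0 r1.
set E := expR (r * u).
have E0 : 0 < E := expR_gt0 _.
have hu : expR u = E * expR ((1 - r) * u).
  by rewrite /E -expRD; congr expR; ring.
have hF := expR_ge1Dx ((1 - r) * u).
have hG := expR_ge1Dx (- (r * u)).
have EG : E * expR (- (r * u)) = 1 by rewrite /E expRN mulfV // gt_eqF.
have h1 : E * (1 - r * u) <= 1.
  rewrite -EG; apply: ler_wpM2l; [exact: ltW | lra].
have h2 : r * E * (1 + (1 - r) * u) <= r * E * expR ((1 - r) * u).
  by apply: ler_wpM2l => //; apply: mulr_ge0 => //; exact: ltW.
rewrite hu.
have h3 : 0 <= (1 - r) * (1 - E * (1 - r * u)) by apply: mulr_ge0; lra.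
nra.
Qed.

Lemma pointwise (x t b r : R) (n : nat) : 0 <= x -> 0 < t -> 0 <= r <= 1 ->
  r * b * t = n%:R ->
  x ^+ n <= t ^+ n * (r * expR (b * (x - t)) + (1 - r)).
Proof.
move=> x0 t0 hr hn.
set y := x / t.
have y0 : 0 <= y by apply: divr_ge0 => //; exact: ltW.
have hx : x = t * y by rewrite /y mulrC divfK // gt_eqF.
have hy : y <= expR (y - 1) by have := expR_ge1Dx (y - 1); lra.
have h1 : y ^+ n <= expR (r * (b * (x - t))).
  have -> : r * (b * (x - t)) = n%:R * (y - 1).
    by rewrite -hn hx; ring.
  rewrite expRM_natl; apply: lerXn2r => //; rewrite ?nnegrE //; exact: ltW (expR_gt0 _).
rewrite {1}hx exprMn; apply: ler_wpM2l; first by apply: exprn_ge0; exact: ltW.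
apply: le_trans h1 _; exact: conv_exp.
Qed.


Lemma ln2_gt0 : 0 < ln (2 : R).
Proof. by apply: ln_gt0; rewrite ltr1n. Qed.

Lemma ln2_ge : 2^-1 <= ln (2 : R).
Proof.
have := @ln_le_sub1 ((2 : R)^-1) (ltac:(by rewrite invr_gt0)).
rewrite lnV ?posrE //; lra.
Qed.

Lemma binent_ln (t : R) : 0 < t < 1 ->
  ln 2 * binent t = - (t * ln t) - (1 - t) * ln (1 - t).
Proof.
case/andP=> t0 t1.
rewrite /binent /log2 !lnV ?posrE ?subr_gt0 //.
have := ln2_gt0; move=> l2.
by field; rewrite gt_eqF.
Qed.

Lemma key_ineq (t : R) : 2^-1 <= t < 1 ->
  ln 2 + t * ln t + (1 - t) * ln (1 - t) <= ln 2 * t * (ln t - ln (1 - t)).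
Proof.
case/andP=> t0 t1.
have tp : 0 < t by lra.
have tq : 0 < 1 - t by lra.
set L1 := ln (2 * t). set L2 := - ln (2 * (1 - t)).
have e1 : ln t = L1 - ln 2 by rewrite /L1 lnM ?posrE //; ring.
have e2 : ln (1 - t) = - L2 - ln 2 by rewrite /L2 lnM ?posrE //; ring.
have hL1a : 0 <= L1 by apply: ln_ge0; lra.
have hL1b : L1 <= 2 * t - 1 by have := ln_le_sub1 (2 * t) ltac:(lra); rewrite /L1; lra.
have hL2 : 2 * t - 1 <= L2 by have := ln_le_sub1 (2 * (1 - t)) ltac:(lra); rewrite /L2; lra.
have l2a := ln2_ge. have l2b : ln (2:R) <= 1 by have := ln_le_sub1 ((2:R)) ltac:(lra); lra.
rewrite e1 e2.
have h1 : t * L1 * (1 - ln 2) <= t * (2 * t - 1) * (1 - ln 2).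
  apply: ler_wpM2r; first lra. apply: ler_wpM2l; lra.
have h2 : (2 * t - 1) * ((1 - t) + t * ln 2) <= L2 * ((1 - t) + t * ln 2).
  apply: ler_wpM2r => //; nra.
have h3 : t * (2 * t - 1) * (1 - ln 2) <= (2 * t - 1) * ((1 - t) + t * ln 2).
  have : 0 <= (2 * t - 1) * (1 - 2 * t * (1 - ln 2)) by apply: mulr_ge0; nra.
  nra.
nra.
Qed.


Lemma sum_ind (T : finType) (A : {pred T}) :
  \sum_(x : T) (x \in A)%:R = #|A|%:R :> R.
Proof.
rewrite -sum1_card natr_sum [RHS]big_mkcond /=; apply: eq_bigr => x _.
by case: (x \in A).
Qed.

Lemma sum_sub (T : finType) (A : {pred T}) (F : T -> R) :
  (forall x, 0 <= F x) -> \sum_(x in A) F x <= \sum_x F x.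
Proof.
move=> F0; rewrite [X in _ <= X](bigID (mem A)) /=.
rewrite lerDl; apply: sumr_ge0 => x _; exact: F0.
Qed.

End Ana.

Section Comb.
Variable R : realType.
Variables (N d : nat) (L : finType) (Psi : {ffun 'I_N -> bool} -> L) (lam : L).
Local Notation S := (S_lam Psi lam).
Definition Ag (k k' : {ffun 'I_N -> bool}) := [set j : 'I_N | k j == k' j].

Local Open Scope classical_set_scope.
Lemma in_cset (T : Type) (b : T -> bool) x : (x \in [set y | b y]) = b x.
Proof. by apply/idP/idP; rewrite in_setE. Qed.

Lemma card_eq r (p : 'I_r -> 'I_N) (x : {ffun 'I_r -> bool}) :
  #|[set k | (Psi k == lam) && [forall i, k (p i) == x i]]|%:R
   = \sum_(k in S) ([forall i, k (p i) == x i])%:R :> R.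
Proof.
rewrite -sum_ind [RHS]big_mkcond /=; apply: eq_bigr => k _.
rewrite in_cset /S_lam inE; by case: (Psi k == lam).
Qed.
Local Close Scope classical_set_scope.

Lemma g_eq r (p : 'I_r -> 'I_N) : g_lam R Psi lam p =
  (#|S|%:R ^+ 2)^-1 * \sum_(k in S) \sum_(k' in S)
     ([forall i, k' (p i) == k (p i)])%:R.
Proof.
rewrite /g_lam /P_lam.
under eq_bigr => x _ do rewrite card_eq expr_div_n mulrC.
rewrite -mulr_sumr; congr (_ * _).
under eq_bigr => x _ do rewrite expr2 big_distrlr.
rewrite exchange_big /=; apply: eq_bigr => k _.
rewrite exchange_big /=; apply: eq_bigr => k' _.
set x0 := [ffun i => k (p i)].
have hx : forall x : {ffun 'I_r -> bool},
    [forall i, k (p i) == x i] = (x == x0).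
  move=> x; apply/forallP/eqP => [h|->] /=.
    by apply/ffunP => i; rewrite ffunE; apply/esym/eqP.
  by move=> i; rewrite ffunE.
under eq_bigr => x _ do rewrite hx.
rewrite (bigD1 x0) //= eqxx mul1r big1 ?addr0.
  congr ((nat_of_bool _)%:R); apply: eq_forallb => i; by rewrite ffunE.
by move=> x /negbTE ->; rewrite mul0r.
Qed.

Lemma sum_p (k k' : {ffun 'I_N -> bool}) :
  \sum_(p : {ffun 'I_d -> 'I_N}) ([forall i, k' (p i) == k (p i)])%:R
   = #|Ag k k'|%:R ^+ d :> R.
Proof.
rewrite -natrX; have := card_ffun_on 'I_d (Ag k k'); rewrite card_ord => <-; rewrite -sum_ind.
apply: eq_bigr => p _; congr ((nat_of_bool _)%:R).
apply/forallP/ffun_onP => h i; have := h i; rewrite /Ag inE eq_sym //.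
Qed.

Lemma Eg_eq : Eg_lam R Psi lam d =
  (#|S|%:R ^+ 2)^-1 * \sum_(k in S) \sum_(k' in S)
     (#|Ag k k'|%:R / N%:R) ^+ d.
Proof.
rewrite /Eg_lam.
under eq_bigr => p _ do rewrite g_eq.
rewrite -mulr_sumr mulrCA; congr (_ * _).
rewrite exchange_big /= mulr_sumr; apply: eq_bigr => k _.
rewrite exchange_big /= mulr_sumr; apply: eq_bigr => k' _.
by rewrite sum_p expr_div_n mulrC.
Qed.


Lemma sumz (k : {ffun 'I_N -> bool}) (z : R) :
  \sum_(k' : {ffun 'I_N -> bool}) z ^+ #|Ag k k'| = (1 + z) ^+ N.
Proof.
have hz : forall k', z ^+ #|Ag k k'| = \prod_j (if k j == k' j then z else 1).
  by move=> k'; rewrite -prodr_const big_mkcond; apply: eq_bigr => j _; rewrite /Ag inE.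
under eq_bigr => k' _ do rewrite hz.
rewrite -(bigA_distr_bigA (fun j b => if k j == b then z else 1)) /=.
under eq_bigr => j _ do rewrite big_bool.
rewrite -[in RHS](card_ord N) -prodr_const; apply: eq_bigr => j _.
by case: (k j) => /=; rewrite addrC.
Qed.

Lemma perk (k : {ffun 'I_N -> bool}) (t : R) :
  (0 < N)%N -> (1 <= d)%N -> 2^-1 <= t < 1 ->
  d%:R <= N%:R * t * ln (t / (1 - t)) ->
  N%:R * (ln 2 * binent t) <= ln (#|S|%:R) -> 0 < #|S|%:R :> R ->
  \sum_(k' in S) (#|Ag k k'|%:R / N%:R) ^+ d <= #|S|%:R * t ^+ d.
Proof.
move=> N0 d1 /andP[t1 t2] hd hM M0.
have tp : 0 < t by lra.
have tq : 0 < 1 - t by lra.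
have Np : 0 < N%:R :> R by rewrite ltr0n.
have dp : 1 <= d%:R :> R by rewrite ler1n.
set z := t / (1 - t).
have z0 : 0 < z by apply: divr_gt0.
set l := ln z. set b := N%:R * l.
have bt : d%:R <= b * t by rewrite /b mulrAC.
have bt0 : 0 < b * t by lra.
set r := d%:R / (b * t).
have r0 : 0 <= r by apply: divr_ge0; lra.
have r1 : r <= 1 by rewrite /r ler_pdivrMr // mul1r.
have hr : r * b * t = d%:R by rewrite /r -mulrA [b * t]mulrC -/(b * t) mulrC divfK // gt_eqF.
set W := fun k' => expR (b * (#|Ag k k'|%:R / N%:R - t)).
have step1 : \sum_(k' in S) (#|Ag k k'|%:R / N%:R) ^+ d
     <= \sum_(k' in S) t ^+ d * (r * W k' + (1 - r)).
  apply: ler_sum => k' _; apply: pointwise => //; last by apply/andP.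
apply: le_trans step1 _.
rewrite -mulr_sumr big_split /= -mulr_sumr sumr_const.
have hW : forall k', W k' = z ^+ #|Ag k k'| * expR (- (b * t)).
  move=> k'; rewrite /W.
  have -> : b * (#|Ag k k'|%:R / N%:R - t) = #|Ag k k'|%:R * l + - (b * t).
    by rewrite /b; field; rewrite gt_eqF.
  by rewrite expRD expRM_natl /l lnK // posrE.
have step3 : \sum_(k' in S) W k' <= #|S|%:R.
  have hs := @sum_sub R _ S W (fun x => expR_ge0 _). apply: le_trans hs _.
  under eq_bigr => k' _ do rewrite hW.
  rewrite -mulr_suml sumz.
  have e1 : 1 + z = (1 - t)^-1 by rewrite /z; field; rewrite gt_eqF.
  have e2 : (1 + z) ^+ N = expR (N%:R * - ln (1 - t)).
    by rewrite e1 expRM_natl -lnV ?posrE // lnK // posrE invr_gt0.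
  rewrite e2 -expRD -[X in _ <= X](@lnK _ #|S|%:R) ?posrE //.
  rewrite ler_expR.
  have el : l = ln t - ln (1 - t) by rewrite /l /z ln_div ?posrE.
  have hb := @binent_ln R t ltac:(lra).
  rewrite /b el.
  apply: le_trans hM; rewrite hb; lra.
have hS0 : 0 <= \sum_(k' in S) W k' by apply: sumr_ge0 => x _; exact: expR_ge0.
have -> : (1 - r) *+ #|S| = (1 - r) * #|S|%:R by rewrite mulr_natr.
have : t ^+ d * (r * \sum_(k' in S) W k' + (1 - r) * #|S|%:R)
   <= t ^+ d * (r * #|S|%:R + (1 - r) * #|S|%:R).
  apply: ler_wpM2l; first by apply: exprn_ge0; lra.
  rewrite lerD2r; exact: ler_wpM2l.
move=> h; apply: le_trans h _.
have -> : t ^+ d * (r * #|S|%:R + (1 - r) * #|S|%:R) = #|S|%:R * t ^+ d by ring.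
by [].
Qed.


Lemma trivk (k : {ffun 'I_N -> bool}) : (0 < N)%N ->
  \sum_(k' in S) (#|Ag k k'|%:R / N%:R) ^+ d <= #|S|%:R * 1 ^+ d :> R.
Proof.
move=> N0; have Np : 0 < N%:R :> R by rewrite ltr0n.
rewrite expr1n mulr1.
have -> : #|S|%:R = \sum_(k' in S) (1 : R) by rewrite sumr_const.
apply: ler_sum => k' _; apply: exprn_ile1.
  by apply: divr_ge0; rewrite ler0n.
rewrite ler_pdivrMr // mul1r ler_nat.
by have := max_card (Ag k k'); rewrite card_ord.
Qed.

Lemma assemble (B : R) : 0 < #|S|%:R :> R ->
  (forall k, \sum_(k' in S) (#|Ag k k'|%:R / N%:R) ^+ d <= #|S|%:R * B) ->
  (#|S|%:R ^+ 2)^-1 * \sum_(k in S) \sum_(k' in S)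
     (#|Ag k k'|%:R / N%:R) ^+ d <= B.
Proof.
move=> M0 h.
have h1 : \sum_(k in S) \sum_(k' in S) (#|Ag k k'|%:R / N%:R) ^+ d
   <= #|S|%:R ^+ 2 * B.
  apply: le_trans (ler_sum _ (fun k _ => h k)) _.
  rewrite sumr_const; have -> : forall x : R, x *+ #|S| = #|S|%:R * x by move=> x; rewrite mulr_natl.
  by rewrite expr2 mulrA.
apply: le_trans (ler_wpM2l _ h1) _.
  by rewrite invr_ge0; apply: exprn_ge0; exact: ltW.
by rewrite mulrA mulVf ?mul1r // expf_neq0 // gt_eqF.
Qed.

End Comb.

Theorem lemma5 (R : realType) (N d : nat) (L : finType)
    (Psi : {ffun 'I_N -> bool} -> L) (lam : L) (alpha : R) :
  (1 <= d)%N ->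
  0 <= alpha ->
  alpha + d%:R <= N%:R ->
  N%:R - alpha <= log2 (#|S_lam Psi lam|%:R : R) ->
  Eg_lam R Psi lam d <= binent_inv (1 - (alpha + d%:R) / N%:R) ^+ d.
Proof.
move=> d1 a0 had hlog.
have dp : 1 <= d%:R :> R by rewrite ler1n.
have N0 : (0 < N)%N by rewrite -(ler1n R); lra.
have Np : 0 < N%:R :> R by rewrite ltr0n.
have l2 := @ln2_gt0 R.
have M0 : 0 < #|S_lam Psi lam|%:R :> R.
  rewrite ltr0n lt0n; apply/negP => /eqP M0; move: hlog.
  rewrite M0 /log2 ln0 // mul0r; lra.
have lnM : (N%:R - alpha) * ln 2 <= ln (#|S_lam Psi lam|%:R : R).
  by rewrite -ler_pdivlMr.
rewrite Eg_eq; apply: assemble => // k.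
rewrite /binent_inv; case: xgetP => [t _ [/andP[t1 t2] ht] | _]; last exact: trivk.
have [->|tn1] := eqVneq t 1; first exact: trivk.
have t3 : t < 1 by rewrite lt_neqAle tn1.
have tp : 0 < t by lra.
have tq : 0 < 1 - t by lra.
have hk := @key_ineq R t ltac:(by apply/andP).
have hb := @binent_ln R t ltac:(lra).
have e : N%:R * (1 - binent t) = alpha + d%:R.
  by rewrite ht; field; rewrite gt_eqF.
have f : 1 - binent t <= t * (ln t - ln (1 - t)).
  rewrite -(ler_pM2l l2); lra.
apply: perk => //; first by apply/andP.
  rewrite ln_div ?posrE // -mulrA.
  apply: le_trans (_ : _ <= N%:R * (1 - binent t)) _; first by rewrite e; lra.
  by apply: ler_wpM2l => //; exact: ltW.
have e2 : N%:R * binent t = N%:R - alpha - d%:R by rewrite -[binent t]opprK; lra.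
rewrite mulrCA e2; nra.
Qed.
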